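(* The three linear orders $I_{even}$, $I_{odd}$ and $I$ are pairwise non-isomorphic.
   Context: Ordinal exponents have their usual ordinal meaning, with $\omega^\omega=\sup_{n<\omega}\omega^n$; $kZ$ denotes $k$ consecutive copies of the order $Z$. The $\omega^*$-sum $\cdots+M_2+M_1$ has $M_{k+1}$ entirely to the left of $M_k$. For $n\ge 0$ let $L_n=\cdots+3\omega^{n+3}+2\omega^{n+2}+\omega^{n+1}+\omega^\omega$ (the $\omega^*$-sum whose $k$-th summand from the right, $k\ge1$, is $k\,\omega^{n+k}$, followed by $\omega^\omega$), and for $n\ge1$ let $L_{-n}=\cdots+(n+3)\omega^{3}+(n+2)\omega^{2}+(n+1)\omega+\omega^\omega$ (the $\omega^*$-sum whose $k$-th summand from the right is $(n+k)\omega^k$, followed by $\omega^\omega$). For orders $M_i$ ($i\in\mathbb{Z}$), $\cdots+M_{-1}+M_0+M_1+\cdots$ denotes the $\mathbb{Z}$-indexed ordered sum. Define \[ I_{even}=\cdots+L_{-2}+L_0+L_2+\cdots,\quad I_{odd}=\cdots+L_{-1}+L_1+L_3+\cdots,\quad I=\cdots+L_{-1}+L_0+L_1+\cdots, \] the $\mathbb{Z}$-sums of the $L_i$ over even $i$, odd $i$, and all $i$ respectively, in increasing order of index. *)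

(* Defs.v *)
From mathcomp Require Import all_boot all_order all_algebra.
Set Implicit Arguments. Unset Strict Implicit. Unset Printing Implicit Defensive.
Import Order.TTheory GRing.Theory Num.Theory.

Record linord := LinOrd { lo_car : Type; lo_lt : lo_car -> lo_car -> Prop }.

Definition order_iso (A B : linord) : Prop :=
  exists f : lo_car A -> lo_car B,
    bijective f /\ forall x y, lo_lt x y <-> lo_lt (f x) (f y).

(* The ordinal  omega^(m-1)*a_(m-1) + ... + omega*a_1 + a_0  is represented
   by s = [:: a_0; ...; a_(m-1)] with a_(m-1) <> 0 (the empty list is 0). *)
Definition cnf_normal (s : seq nat) : bool := last 1%N s != 0%N.

Fixpoint lexlt (s t : seq nat) : bool :=
  match s, t with
  | a :: s', b :: t' => (a < b)%N || ((a == b) && lexlt s' t')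
  | _, _ => false
  end.

Definition cnf_lt (s t : seq nat) : bool :=
  (size s < size t)%N || ((size s == size t) && lexlt (rev s) (rev t)).

(* An ordinal x is < omega^e (e finite) iff its normal form has size <= e. *)

(* For i >= 0 the k-th summand (k >= 1) from the right is k*omega^(i+k);
   for i = -n < 0 it is (n+k)*omega^k.  Uniformly: c(i,k) copies of omega^(e(i,k)). *)
Definition Lcoef (i : int) (k : nat) : nat :=
  (k + (if (i < 0)%R then `|i| else 0))%N.
Definition Lexp (i : int) (k : nat) : nat :=
  (k + (if (0 <= i)%R then `|i| else 0))%N.

(* Elements of L_i: either LTop x, x in the final omega^omega summand,
   or LSum k j x: the element x of the j-th copy (j < c(i,k)) of omega^(e(i,k))
   in the k-th summand from the right. *)
Inductive Lelt := LTop of seq nat | LSum of nat & nat & seq nat.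

Definition Lvalid (i : int) (p : Lelt) : bool :=
  match p with
  | LTop x => cnf_normal x
  | LSum k j x => [&& (0 < k)%N, (j < Lcoef i k)%N, cnf_normal x & (size x <= Lexp i k)%N]
  end.

(* Order within a fixed L_i: omega^*-sum (larger k is further left),
   k copies in increasing j, then ordinal order; omega^omega summand last. *)
Definition Llt (p q : Lelt) : bool :=
  match p, q with
  | LSum k j x, LSum k' j' x' =>
      (k' < k)%N || ((k == k') && ((j < j')%N || ((j == j') && cnf_lt x x')))
  | LSum _ _ _, LTop _ => true
  | LTop _, LSum _ _ _ => false
  | LTop x, LTop y => cnf_lt x y
  end.

Definition Zsum_car (P : int -> bool) : Type :=
  { q : int * Lelt | P q.1 && Lvalid q.1 q.2 }.

Definition Zsum_lt (P : int -> bool) (a b : Zsum_car P) : Prop :=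
  let (i, p) := proj1_sig a in
  let (i', p') := proj1_sig b in
  ((i < i')%R || ((i == i') && Llt p p')) = true.

Definition Zsum (P : int -> bool) : linord := @LinOrd (Zsum_car P) (@Zsum_lt P).

Definition I_even : linord := Zsum (fun i => ~~ odd `|i|).
Definition I_odd  : linord := Zsum (fun i => odd `|i|).
Definition I_all  : linord := Zsum (fun _ => true).

(* Main.v *)
Require Import Defs.
From mathcomp Require Import all_boot all_order all_algebra.
From mathcomp Require Import zify.
Set Implicit Arguments. Unset Strict Implicit. Unset Printing Implicit Defensive.

Fixpoint strip (s : seq nat) : seq nat :=
  match s with
  | [::] => [::]
  | a :: s' => let t := strip s' in if (t == [::]) && (a == 0%N) then [::] else a :: t
  end.

Lemma nth_strip s r : nth 0 (strip s) r = nth 0 s r.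
Proof.
elim: s r => [|a s IH] r /=; first by [].
case: ifP => [/andP[/eqP E /eqP ->]|_].
  case: r => [|r] //=; by rewrite -IH E nth_nil.
by case: r.
Qed.

Lemma size_strip s : (size (strip s) <= size s)%N.
Proof. elim: s => [|a s IH] //=; case: ifP => //= _; lia. Qed.

Lemma strip_normal s : cnf_normal (strip s).
Proof.
rewrite /cnf_normal; elim: s => [|a s IH] //=.
case: ifP => [_|] //= Hc.
case E: (strip s) => [|b t] /=.
  by rewrite E eqxx /= in Hc; rewrite Hc.
by rewrite E /= in IH.
Qed.

Lemma normal_last s : cnf_normal s -> s != [::] -> nth 0 s (size s).-1 != 0%N.
Proof.
rewrite /cnf_normal; case: s => [|a s] //= H _.
by rewrite (last_nth 0) in H.
Qed.

Lemma normal_eq s t : cnf_normal s -> cnf_normal t ->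
  (forall r, nth 0 s r = nth 0 t r) -> s = t.
Proof.
move=> Hs Ht E.
have Hsz : size s = size t.
  case: (ltngtP (size s) (size t)) => // H.
  - have Ht0 : t != [::] by case: t Ht E H.
    have := normal_last Ht Ht0; rewrite -E nth_default //; lia.
  - have Hs0 : s != [::] by case: s Hs E H.
    have := normal_last Hs Hs0; rewrite E nth_default //; lia.
apply: (@eq_from_nth _ 0) => // i _; exact: E.
Qed.

Lemma normal_nil s : cnf_normal s -> (forall r, nth 0 s r = 0%N) -> s = [::].
Proof. move=> Hs H; apply: normal_eq => // r; by rewrite H nth_nil. Qed.

Lemma size_leP s e : cnf_normal s -> (size s <= e)%N <-> (forall r, (e <= r)%N -> nth 0 s r = 0%N).
Proof.
move=> Hs; split.
  move=> H r Hr; apply: nth_default; lia.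
move=> H; case: (leqP (size s) e) => // Hlt.
have Hs0 : s != [::] by case: s Hs H Hlt.
have := normal_last Hs Hs0; rewrite H //; lia.
Qed.

Definition lowd (s : seq nat) : nat := find (fun a => a != 0%N) s.

Lemma has_nz s : cnf_normal s -> s != [::] -> has (fun a => a != 0%N) s.
Proof.
move=> Hs H0; apply/(has_nthP 0); exists (size s).-1.
  by case: s H0 {Hs} => //= a s _; lia.
exact: normal_last.
Qed.

Lemma lowd_lt s : cnf_normal s -> s != [::] -> (lowd s < size s)%N.
Proof. move=> Hs H0; rewrite /lowd -has_find; exact: has_nz. Qed.

Lemma lowd_nz s : cnf_normal s -> s != [::] -> nth 0 s (lowd s) != 0%N.
Proof. move=> Hs H0; exact: (nth_find 0 (has_nz Hs H0)). Qed.

Lemma before_lowd s r : (r < lowd s)%N -> nth 0 s r = 0%N.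
Proof. move=> H; have := before_find 0 H; by case: (nth 0 s r). Qed.

Definition dlt (s t : seq nat) : Prop :=
  exists q, (nth 0 s q < nth 0 t q)%N /\ forall r, (q < r)%N -> nth 0 s r = nth 0 t r.

Lemma lexltE s t : size s = size t -> lexlt s t <->
  exists q, [/\ (q < size s)%N, (nth 0 s q < nth 0 t q)%N &
                forall r, (r < q)%N -> nth 0 s r = nth 0 t r].
Proof.
elim: s t => [|a s IH] [|b t] //=; try by split=> // -[q []].
move=> [] /IH {}IH; split.
  case/orP=> [H|/andP[/eqP E /IH [q [H1 H2 H3]]]].
    by exists 0%N; split=> //.
  exists q.+1; split=> // -[|r] //= Hr; exact: H3.
move=> [[|q] [H1 H2 H3]] /=; first by rewrite H2.
apply/orP; right; apply/andP; split; first by have := H3 0%N erefl => /= ->.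
apply/IH; exists q; split=> // r Hr; exact: (H3 r.+1).
Qed.

Lemma cnf_ltE s t : cnf_normal s -> cnf_normal t -> cnf_lt s t <-> dlt s t.
Proof.
move=> Hs Ht; rewrite /cnf_lt; split.
  case/orP=> [Hlt|/andP[/eqP Hsz /lexltE]].
    have Ht0 : t != [::] by case: t Ht Hlt.
    exists (size t).-1; split.
      rewrite nth_default; last lia.
      by have := normal_last Ht Ht0; case: (nth 0 t _).
    move=> r Hr; rewrite !nth_default //; lia.
  rewrite !size_rev Hsz => /(_ erefl) [q [H1 H2 H3]].
  exists (size t - q.+1)%N; split.
    by rewrite !nth_rev ?Hsz in H2.
  move=> r Hr; case: (leqP (size t) r) => Hr2.
    rewrite !nth_default //; lia.
  have Hq : (size t - r.+1 < q)%N by lia.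
  have := H3 _ Hq; rewrite !nth_rev ?Hsz; try lia.
  by have -> : (size t - (size t - r.+1).+1 = r)%N by lia.
move=> [q [H1 H2]].
case: (ltngtP (size s) (size t)) => Hc //=.
- have Hs0 : s != [::] by case: s Hs H1 H2 Hc.
  have := normal_last Hs Hs0.
  case: (ltnP q (size s).-1) => Hq.
    rewrite H2 //; rewrite nth_default //; lia.
  move: H1; rewrite (nth_default 0 (_ : size t <= q)%N) //; lia.
- have Hq : (q < size s)%N.
    case: (ltnP q (size s)) => // Hq; move: H1; rewrite (nth_default 0 (_ : size t <= q)%N) //; lia.
  apply/lexltE; first by rewrite !size_rev.
  exists (size s - q.+1)%N; rewrite size_rev; split; first lia.
    rewrite !nth_rev ?Hc; try lia.
    by have -> : (size t - (size t - q.+1).+1 = q)%N by lia.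
  move=> r Hr; rewrite !nth_rev ?Hc; try lia.
  apply: H2; lia.
Qed.

Definition dec (x : seq nat) : seq nat :=
  strip (set_nth 0 x (lowd x) (nth 0 x (lowd x)).-1).

Lemma nth_dec x r : nth 0 (dec x) r = if r == lowd x then (nth 0 x r).-1 else nth 0 x r.
Proof. rewrite /dec nth_strip nth_set_nth /=; case: eqP => // ->; done. Qed.

Lemma dec_normal x : cnf_normal (dec x).
Proof. exact: strip_normal. Qed.

Lemma lowd_le s r : cnf_normal s -> nth 0 s r != 0%N -> s != [::] /\ (lowd s <= r)%N.
Proof.
move=> Hs Hr; split; first by case: s Hs Hr => //; rewrite nth_nil.
case: (leqP (lowd s) r) => // H; by rewrite before_lowd in Hr.
Qed.

Lemma lowd_ge s r : cnf_normal s -> s != [::] ->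
  (forall r', (r' < r)%N -> nth 0 s r' = 0%N) -> (r <= lowd s)%N.
Proof.
move=> Hs H0 H; case: (leqP r (lowd s)) => // Hlt.
by have := lowd_nz Hs H0; rewrite H.
Qed.

Lemma dlt_dec x : cnf_normal x -> x != [::] -> dlt (dec x) x.
Proof.
move=> Hx H0; exists (lowd x); rewrite nth_dec eqxx; split.
  by have := lowd_nz Hx H0; case: (nth 0 x _).
move=> r0 Hr; rewrite nth_dec; case: eqP => [E|//]; lia.
Qed.

Lemma dec_size x e : cnf_normal x -> x != [::] -> (size x <= e)%N -> (size (dec x) <= e)%N.
Proof.
move=> Hx H0 He; apply/size_leP; first exact: dec_normal.
move=> r Hr; rewrite nth_dec; have := lowd_lt Hx H0.
case: eqP => [E|_] Hl; first lia.
exact: (proj1 (size_leP _ Hx) He).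
Qed.

Lemma dec_lowd x : cnf_normal x -> x != [::] -> dec x != [::] -> (lowd x <= lowd (dec x))%N.
Proof.
move=> Hx H0 H1; apply: lowd_ge => //; first exact: dec_normal.
move=> r Hr; rewrite nth_dec; case: eqP => [E|_]; first lia.
exact: before_lowd.
Qed.

Lemma mid_low x x' : cnf_normal x -> x != [::] -> dlt (dec x) x' -> dlt x' x ->
  exists2 r, (r < lowd x)%N & nth 0 x' r != 0%N.
Proof.
move=> Hx H0 [q2 [A2 B2]] [q1 [A1 B1]].
have Hm := lowd_nz Hx H0.
case: (ltnP q2 (lowd x)) => Hq2.
  exists q2 => //; move: A2; rewrite nth_dec; case: eqP => _; first lia.
  rewrite before_lowd //; lia.
exfalso.
case: (ltngtP q1 q2) => Hq.
- have E := B1 _ Hq; move: A2; rewrite nth_dec E.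
  case: eqP => [Eq|Ne]; last lia.
  have : (q1 < lowd x)%N by lia.
  move/before_lowd => Z; move: A1; rewrite Z; lia.
- have E := B2 _ Hq; move: E; rewrite nth_dec; case: eqP => [Eq|_]; first lia.
  lia.
- subst q2; move: A2; rewrite nth_dec; case: eqP => [Eq|Ne]; last lia. move: A1; rewrite Eq; lia.
Qed.

Lemma lexlt_tri s t : size s = size t -> s = t \/ lexlt s t \/ lexlt t s.
Proof.
elim: s t => [|a s IH] [|b t] //= Hs; first by left.
move: Hs => [] /IH [->|[H|H]] /=.
- case: (ltngtP a b) => Hab.
  + by right; left.
  + by right; right.
  + by left; rewrite Hab.
- case: (ltngtP a b) => Hab.
  + by right; left.
  + by right; right.
  + by right; left; apply/orP; right; rewrite ?Hab ?eqxx H.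
- case: (ltngtP a b) => Hab.
  + by right; left.
  + by right; right.
  + by right; right; apply/orP; right; rewrite ?Hab ?eqxx H.
Qed.

Lemma cnf_tri s t : s = t \/ cnf_lt s t \/ cnf_lt t s.
Proof.
rewrite /cnf_lt; case: (ltngtP (size s) (size t)) => Hc /=; auto.
have : size (rev s) = size (rev t) by rewrite !size_rev.
move/lexlt_tri => [E|[H|H]]; auto.
by left; rewrite -(revK s) E revK.
Qed.

Lemma cnf_lt_nil x : cnf_lt x [::] = false.
Proof. by case: x => //= a x; rewrite /cnf_lt /= ltn0 /=; case: (rev _). Qed.

Definition dg (i : int) (p : Lelt) : nat :=
  match p with
  | LSum k j x => if x == [::] then (if j == 0%N then Lexp i k.+1 else Lexp i k) else lowd x
  | LTop x => if x == [::] then Lexp i 1 else lowd x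
  end.

Definition stepL (i : int) (p : Lelt) : Lelt :=
  match p with
  | LSum k j x => if x == [::] then
                    (if j == 0%N then LSum k.+1 (Lcoef i k.+1).-1 [::] else LSum k j.-1 [::])
                  else LSum k j (dec x)
  | LTop x => if x == [::] then LSum 1 (Lcoef i 1).-1 [::]
              else if (dec x == [::]) && (Lexp i 1 < lowd x)%N then LSum (lowd x - Lexp i 1) 0 [::]
              else LTop (dec x)
  end.

Lemma LexpS i k : Lexp i k.+1 = (Lexp i k).+1.
Proof. by rewrite /Lexp addSn. Qed.

Lemma Lexp_ge i k : (k <= Lexp i k)%N.
Proof. rewrite /Lexp; lia. Qed.

Lemma Lcoef_gt0 i k : (0 < k)%N -> (0 < Lcoef i k)%N.
Proof. rewrite /Lcoef; lia. Qed.

Lemma Lexp_mono i k k' : (k <= k')%N -> (Lexp i k <= Lexp i k')%N.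
Proof. rewrite /Lexp; lia. Qed.

Lemma dg_LSum_le i k j x : Lvalid i (LSum k j x) -> (dg i (LSum k j x) <= Lexp i k.+1)%N.
Proof.
move=> /and4P [_ _ Hn Hs] /=; rewrite LexpS.
case: eqP => [_|/eqP H0]; first by case: eqP => _; lia.
have := lowd_lt Hn H0; lia.
Qed.

Lemma dg_LSum_le2 i k j x : Lvalid i (LSum k j x) -> (j != 0%N) || (x != [::]) ->
  (dg i (LSum k j x) <= Lexp i k)%N.
Proof.
move=> /and4P [_ _ Hn Hs] Hjx /=.
case: (x =P [::]) => [E|/eqP H0] /=.
  by move: Hjx; rewrite E /= orbF; case: eqP.
have := lowd_lt Hn H0; lia.
Qed.

Lemma dg_LSum_lt i k j x : Lvalid i (LSum k j x) -> x != [::] ->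
  (dg i (LSum k j x) < Lexp i k)%N.
Proof.
move=> /and4P [_ _ Hn Hs] /= H0; rewrite (negbTE H0).
have := lowd_lt Hn H0; lia.
Qed.

Lemma mkvalid i k j x : (0 < k)%N -> (j < Lcoef i k)%N -> cnf_normal x -> (size x <= Lexp i k)%N ->
  Lvalid i (LSum k j x).
Proof. by move=> *; apply/and4P. Qed.

Lemma cnf_lt_nil_r x : cnf_lt [::] x -> x != [::].
Proof. by case: x. Qed.

Lemma stepA i p : Lvalid i p ->
  [/\ Lvalid i (stepL i p), Llt (stepL i p) p & (dg i p <= dg i (stepL i p))%N].
Proof.
case: p => [x|k j x] /=.
- move=> Hn; case: eqP => [->|/eqP H0].
    split.
    + apply/and4P; split=> //; have := Lcoef_gt0 i (isT : (0 < 1)%N); lia.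
    + by [].
    + rewrite /=; case: eqP => _; rewrite ?LexpS //; lia.
  case: andP => [[/eqP D L]|ND].
    split.
    + apply/and4P; split=> //; [lia | apply: Lcoef_gt0; lia].
    + by [].
    + rewrite /= /Lexp in L *; lia.
  split=> //=.
  + exact: dec_normal.
  + apply/cnf_ltE => //; [exact: dec_normal | exact: dlt_dec].
  + case: eqP => [D|/eqP D]; last exact: dec_lowd.
    case: (leqP (lowd x) (Lexp i 1)) => // L; exfalso; apply: ND; split=> //; exact/eqP.
- move=> /and4P [Hk Hj Hn Hs]; case: eqP => [->|/eqP H0].
    case: eqP => [->|/eqP Hj0].
      split.
      + apply: mkvalid => //; have := Lcoef_gt0 i (ltn0Sn k); lia.
      + by rewrite /= ltnSn.
      + rewrite /=; case: eqP => _; rewrite ?LexpS //; lia.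
    split.
    + apply: mkvalid => //; lia.
    + rewrite /= ltnn eqxx /=; lia.
    + rewrite /=; case: eqP => _; rewrite ?LexpS //; lia.
  split.
  + apply: mkvalid => //; [exact: dec_normal | exact: dec_size].
  + rewrite /= ltnn !eqxx ltnn /=; apply/cnf_ltE => //; [exact: dec_normal | exact: dlt_dec].
  + rewrite /=; case: eqP => [D|/eqP D]; last exact: dec_lowd.
    have := lowd_lt Hn H0; case: eqP => _; rewrite ?LexpS; lia.
Qed.

Lemma stepL_SS i k j x : stepL i (LSum k j x) =
  if x == [::] then (if j == 0%N then LSum k.+1 (Lcoef i k.+1).-1 [::] else LSum k j.-1 [::])
  else LSum k j (dec x).
Proof. by []. Qed.

Lemma LltSP k j x k' j' x' : Llt (LSum k j x) (LSum k' j' x') <->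
  (k' < k)%N \/ (k = k' /\ ((j < j')%N \/ (j = j' /\ cnf_lt x x'))).
Proof.
rewrite /=; split.
  case/orP => [H|/andP[/eqP -> /orP[H|/andP[/eqP -> H]]]]; auto.
case=> [H|[E [H|[E2 H]]]]; first by rewrite H.
- by rewrite E eqxx H orbT.
- by rewrite E E2 !eqxx H !orbT.
Qed.

Lemma dec_nil_digits x r : dec x = [::] -> r != lowd x -> nth 0 x r = 0%N.
Proof. move=> D Hr; have := nth_dec x r; rewrite D nth_nil (negbTE Hr); by move/esym. Qed.

Lemma stepB i p q : Lvalid i p -> Lvalid i q -> Llt (stepL i p) q -> Llt q p ->
  (dg i q < dg i p)%N.
Proof.
case: p => [x|k j x].
- move=> /= Hn Vq; case: (x =P [::]) => [->|/eqP H0] /=.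
  + case: q Vq => [x'|k' j' x'] Vq /=.
      by rewrite cnf_lt_nil.
    move=> H _; have Hk' : (0 < k')%N by case/and4P: Vq.
    have Hj' : (j' < Lcoef i k')%N by case/and4P: Vq.
    move: H; case: (ltngtP 1 k') => Hk //=; first lia.
    subst k'; case: (ltngtP (Lcoef i 1).-1 j') => Hj //=; first lia.
    move/cnf_lt_nil_r => Hx'; exact: dg_LSum_lt.
  + case: andP => [[/eqP D L]|ND].
    * case: q Vq => [x'|k' j' x'] Vq /=.
        move=> _ Hlt; have Hn' : cnf_normal x' by [].
        case/(cnf_ltE Hn' Hn): Hlt => q1 [A1 B1].
        have Hq1 : q1 = lowd x.
          case: (q1 =P lowd x) => // /eqP Ne; by move: A1; rewrite (dec_nil_digits D Ne) ltn0.
        subst q1.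
        case: eqP => [_|/eqP H0']; first exact: L.
        have Hl := lowd_nz Hn' H0'.
        case: (ltngtP (lowd x') (lowd x)) => C //.
        - exfalso; move: Hl; rewrite B1 // dec_nil_digits //; lia.
        - exfalso; move: Hl; rewrite C.
          have : nth 0 x (lowd x) = 1%N.
            have := nth_dec x (lowd x); rewrite D nth_nil eqxx.
            have := lowd_nz Hn H0; lia.
          lia.
      move=> H _; change (dg i (LSum k' j' x') < lowd x)%N.
      have H1 := dg_LSum_le Vq; have H2 := dg_LSum_le2 Vq.
      move: (dg i (LSum k' j' x')) H1 H2 => d H1 H2.
      have EK : Lexp i (lowd x - Lexp i 1).+1 = lowd x by rewrite /Lexp in L *; lia.
      rewrite -EK LexpS.
      move: H; set K := (lowd x - Lexp i 1)%N.
      case/orP => [Hk|/andP[/eqP Hk Hj]].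
        have := Lexp_mono i Hk; lia.
      rewrite Hk.
      have : (j' != 0%N) || (x' != [::]).
        case/orP: Hj => [Hj|/andP[_ Hx]]; first by rewrite -lt0n Hj.
        by rewrite (cnf_lt_nil_r Hx) orbT.
      move/H2; lia.
    * case: q Vq => [x'|k' j' x'] Vq //= Hlt Hlt2.
      have Hn' : cnf_normal x' by [].
      case/(cnf_ltE (dec_normal x) Hn'): Hlt => q2 H2.
      case/(cnf_ltE Hn' Hn): Hlt2 => q1 H1.
      have [r Hr Hnz] := mid_low Hn H0 (ex_intro _ q2 H2) (ex_intro _ q1 H1).
      have [Hx' Hle] := lowd_le Hn' Hnz.
      rewrite (negbTE Hx'); lia.
- move=> Vp; case/and4P: (Vp) => Hk Hj Hn Hs.
  case: q => [x'|k' j' x'] Vq; first by move=> _ /=.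
  have Hn' : cnf_normal x' by case/and4P: Vq.
  have Hj' : (j' < Lcoef i k')%N by case/and4P: Vq.
  rewrite stepL_SS; case: (x =P [::]) => [Ex|/eqP H0].
  + subst x; case: (j =P 0%N) => [Ej|/eqP Hj0].
    * subst j => /LltSP H1 /LltSP H2.
      have -> : dg i (LSum k 0 [::]) = Lexp i k.+1 by [].
      case: H2 => [Hk2|[_ [Hj2|[_ Hc]]]]; [|lia|by rewrite cnf_lt_nil in Hc].
      case: H1 => [Hk1|[Ek [Hj1|[Ej1 Hc]]]]; [lia|subst k'; lia|].
      subst k'; exact: (dg_LSum_lt Vq (cnf_lt_nil_r Hc)).
    * move=> /LltSP H1 /LltSP H2.
      have -> : dg i (LSum k j [::]) = Lexp i k by rewrite /= (negbTE Hj0).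
      case: H2 => [Hk2|[Ek2 [Hj2|[_ Hc]]]]; [|subst k'|by rewrite cnf_lt_nil in Hc].
        case: H1 => [Hk1|[Ek _]]; lia.
      case: H1 => [Hk1|[_ [Hj1|[Ej1 Hc]]]]; [lia|lia|].
      exact: (dg_LSum_lt Vq (cnf_lt_nil_r Hc)).
  + rewrite /= => /LltSP H1 /LltSP H2.
    case: H2 => [Hk2|[Ek2 [Hj2|[Ej2 Hlt2]]]].
    - case: H1 => [Hk1|[Ek _]]; lia.
    - case: H1 => [Hk1|[_ [Hj1|[Ej1 _]]]]; lia.
    subst k' j'; case: H1 => [Hk1|[_ [Hj1|[_ Hlt]]]]; [lia|lia|].
    case/(cnf_ltE (dec_normal x) Hn'): Hlt => q2 Hq2.
    case/(cnf_ltE Hn' Hn): Hlt2 => q1 Hq1.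
    have [r Hr Hnz] := mid_low Hn H0 (ex_intro _ q2 Hq2) (ex_intro _ q1 Hq1).
    have [Hx' Hle] := lowd_le Hn' Hnz.
    rewrite /= (negbTE Hx') (negbTE H0); lia.
Qed.

Definition bump (x : seq nat) (N : nat) : seq nat := strip (set_nth 0 (dec x) (lowd x).-1 N).

Lemma nth_bump x N r : nth 0 (bump x N) r = if r == (lowd x).-1 then N else nth 0 (dec x) r.
Proof. by rewrite /bump nth_strip nth_set_nth. Qed.

Lemma bump_gen x N e : cnf_normal x -> x != [::] -> (0 < lowd x)%N -> (0 < N)%N ->
  (size x <= e)%N ->
  [/\ cnf_normal (bump x N), bump x N != [::], (lowd x <= (lowd (bump x N)).+1)%N,
      (size (bump x N) <= e)%N & cnf_lt (bump x N) x].
Proof.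
move=> Hn H0 Hm HN He.
have Hl := lowd_lt Hn H0.
have Nb : cnf_normal (bump x N) by exact: strip_normal.
have Hnz : nth 0 (bump x N) (lowd x).-1 != 0%N by rewrite nth_bump eqxx; lia.
have [Hb0 _] := lowd_le Nb Hnz.
split=> //.
- suff : ((lowd x).-1 <= lowd (bump x N))%N by lia.
  apply: lowd_ge => // r Hr; rewrite nth_bump nth_dec.
  case: eqP => [E|_]; first lia.
  case: eqP => [E|_]; first lia.
  apply: before_lowd; lia.
- apply/size_leP => // r Hr; rewrite nth_bump nth_dec.
  case: eqP => [E|_]; first lia.
  case: eqP => [E|_]; first lia.
  exact: (proj1 (size_leP _ Hn) He).
- apply/cnf_ltE => //; exists (lowd x); split.
    rewrite nth_bump nth_dec eqxx; case: eqP => [E|_]; first lia.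
    have := lowd_nz Hn H0; lia.
  move=> r Hr; rewrite nth_bump nth_dec; case: eqP => [E|_]; first lia.
  case: eqP => [E|_] //; lia.
Qed.

Lemma bump_above x y' : cnf_normal x -> x != [::] -> (0 < lowd x)%N -> cnf_normal y' ->
  cnf_lt y' x -> cnf_lt y' (bump x (nth 0 y' (lowd x).-1).+1).
Proof.
move=> Hn H0 Hm Hy /(cnf_ltE Hy Hn) [q1 [A1 B1]].
apply/cnf_ltE => //; first exact: strip_normal.
set N := (nth 0 y' (lowd x).-1).+1.
have Hq1 : (lowd x <= q1)%N.
  case: (leqP (lowd x) q1) => // H; move: A1; rewrite (before_lowd H); lia.
case: (ltngtP (lowd x) q1) => C.
- exists q1; split.
    rewrite nth_bump nth_dec; case: eqP => [E|_]; first lia.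
    case: eqP => [E|_] //; lia.
  move=> r Hr; rewrite nth_bump nth_dec B1 //; case: eqP => [E|_]; first lia.
  case: eqP => [E|_] //; lia.
- lia.
- subst q1.
  case: (ltnP (nth 0 y' (lowd x)) (nth 0 x (lowd x)).-1) => C2.
    exists (lowd x); split.
      rewrite nth_bump nth_dec eqxx; case: eqP => [E|_] //; lia.
    move=> r Hr; rewrite nth_bump nth_dec B1 //; case: eqP => [E|_]; first lia.
    case: eqP => [E|_] //; lia.
  exists (lowd x).-1; split.
    by rewrite nth_bump eqxx /N.
  move=> r Hr; rewrite nth_bump nth_dec; case: eqP => [E|_]; first lia.
  case: (ltngtP r (lowd x)) => C3; first lia.
  - by rewrite B1.
  - rewrite C3; lia.
Qed.

Definition single (E N : nat) : seq nat := strip (set_nth 0 [::] E.-1 N).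

Lemma nth_single E N r : nth 0 (single E N) r = if r == E.-1 then N else 0%N.
Proof. by rewrite /single nth_strip nth_set_nth /= nth_nil. Qed.

Lemma single_gen E N : (0 < E)%N -> (0 < N)%N ->
  [/\ cnf_normal (single E N), single E N != [::], (E <= (lowd (single E N)).+1)%N &
      (size (single E N) <= E)%N].
Proof.
move=> HE HN.
have Ns : cnf_normal (single E N) by exact: strip_normal.
have Hnz : nth 0 (single E N) E.-1 != 0%N by rewrite nth_single eqxx; lia.
have [H0 _] := lowd_le Ns Hnz.
split=> //.
- suff : (E.-1 <= lowd (single E N))%N by lia.
  apply: lowd_ge => // r Hr; rewrite nth_single; case: eqP => //; lia.
- apply/size_leP => // r Hr; rewrite nth_single; case: eqP => //; lia.
Qed.

Lemma single_above E y' : (0 < E)%N -> cnf_normal y' -> (size y' <= E)%N ->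
  cnf_lt y' (single E (nth 0 y' E.-1).+1).
Proof.
move=> HE Hy Hs; apply/cnf_ltE => //; first exact: strip_normal.
exists E.-1; split; first by rewrite nth_single eqxx.
move=> r Hr; rewrite nth_single; case: eqP => [E'|_]; first lia.
apply: (proj1 (size_leP _ Hy) Hs); lia.
Qed.

Definition ylist (p : Lelt) : seq nat := match p with LSum _ _ x => x | LTop x => x end.

Lemma stepC i p y : Lvalid i p -> Lvalid i y -> Llt y p -> (0 < dg i p)%N ->
  exists z, [/\ Lvalid i z, Llt y z, Llt z p & (dg i p <= (dg i z).+1)%N].
Proof.
case: p => [x|k j x].
- move=> Hn Vy; case: (x =P [::]) => [Ex|/eqP H0].
  + subst x; move=> Hyp _.
    have HE : (0 < Lexp i 1)%N by have := Lexp_ge i 1; lia.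
    pose N := (nth 0 (ylist y) (Lexp i 1).-1).+1.
    have [Ns Ns0 Nl Nsz] := single_gen HE (ltn0Sn (nth 0 (ylist y) (Lexp i 1).-1)).
    exists (LSum 1 (Lcoef i 1).-1 (single (Lexp i 1) N)); split=> //.
    * apply: mkvalid => //; have := Lcoef_gt0 i (isT : (0 < 1)%N); lia.
    * case: y Vy Hyp @N Ns Ns0 Nl Nsz => [y'|k' j' y'] Vy Hyp N Ns Ns0 Nl Nsz.
        by move: Hyp; rewrite /= cnf_lt_nil.
      case/and4P: Vy => Hk' Hj' Hy' Hsy'.
      apply/LltSP; case: (ltngtP 1 k') => C; [by left| lia |subst k'].
      right; split=> //; case: (ltngtP j' (Lcoef i 1).-1) => C2; [by left| lia|].
      right; split=> //; exact: single_above.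
    * rewrite /= (negbTE Ns0); exact: Nl.
  + move=> Hyp Hdg.
    have Hm' : (0 < lowd x)%N by move: Hdg; rewrite /= (negbTE H0).
    pose N := (nth 0 (ylist y) (lowd x).-1).+1.
    have [Nb Nb0 Nl _ Nlt] := @bump_gen x N (size x) Hn H0 Hm' (ltn0Sn _) (leqnn (size x)).
    exists (LTop (bump x N)); split=> //.
    * case: y Vy Hyp @N Nb Nb0 Nl Nlt => [y'|k' j' y'] Vy Hyp N Nb Nb0 Nl Nlt //.
      exact: bump_above.
    * by rewrite /= (negbTE Nb0) (negbTE H0).
- move=> Vp Vy Hyp Hdg; case/and4P: (Vp) => Hk Hj Hn Hs.
  case: y Vy Hyp => [y'|k' j' y'] Vy Hyp; first by [].
  case/and4P: (Vy) => Hk' Hj' Hy' Hsy'.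
  move/LltSP: Hyp => Hyp.
  case: (x =P [::]) => [Ex|/eqP H0].
  + subst x; case: (j =P 0%N) => [Ej|/eqP Hj0].
    * subst j.
      have HE : (0 < Lexp i k.+1)%N by have := Lexp_ge i k.+1; lia.
      pose N := (nth 0 y' (Lexp i k.+1).-1).+1.
      have [Ns Ns0 Nl Nsz] := single_gen HE (ltn0Sn (nth 0 y' (Lexp i k.+1).-1)).
      exists (LSum k.+1 (Lcoef i k.+1).-1 (single (Lexp i k.+1) N)); split.
      -- apply: mkvalid => //; have := Lcoef_gt0 i (ltn0Sn k); lia.
      -- apply/LltSP; case: Hyp => [Hkk|[_ [Hjj|[_ Hc]]]]; [|lia|by rewrite cnf_lt_nil in Hc].
         case: (ltngtP k.+1 k') => C; [by left|lia|subst k'].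
         right; split=> //; case: (ltngtP j' (Lcoef i k.+1).-1) => C2; [by left|lia|].
         right; split=> //; exact: single_above.
      -- by apply/LltSP; left.
      -- by rewrite /= (negbTE Ns0).
    * have HE : (0 < Lexp i k)%N by have := Lexp_ge i k; lia.
      pose N := (nth 0 y' (Lexp i k).-1).+1.
      have [Ns Ns0 Nl Nsz] := single_gen HE (ltn0Sn (nth 0 y' (Lexp i k).-1)).
      exists (LSum k j.-1 (single (Lexp i k) N)); split.
      -- apply: mkvalid => //; lia.
      -- apply/LltSP; case: Hyp => [Hkk|[Ek [Hjj|[_ Hc]]]]; [by left| |by rewrite cnf_lt_nil in Hc].
         subst k'; right; split=> //; case: (ltngtP j' j.-1) => C2; [by left|lia|].
         right; split=> //; exact: single_above.
      -- apply/LltSP; right; split=> //; left; lia.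
      -- by rewrite /= (negbTE Ns0) (negbTE Hj0).
  + have Hm' : (0 < lowd x)%N by move: Hdg; rewrite /= (negbTE H0).
    pose N := (nth 0 y' (lowd x).-1).+1.
    have [Nb Nb0 Nl Nsz Nlt] := @bump_gen x N (Lexp i k) Hn H0 Hm' (ltn0Sn _) Hs.
    exists (LSum k j (bump x N)); split.
    -- exact: mkvalid.
    -- apply/LltSP; case: Hyp => [Hkk|[Ek [Hjj|[Ej Hc]]]]; [by left|by right; split=> //; left|].
       right; split=> //; right; split=> //; exact: bump_above.
    -- by apply/LltSP; right; split=> //; right; split.
    -- by rewrite /= (negbTE Nb0) (negbTE H0).
Qed.

Lemma Ltot p q : p = q \/ Llt p q \/ Llt q p.
Proof.
case: p => [x|k j x]; case: q => [x'|k' j' x']; try by auto.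
- case: (cnf_tri x x') => [->|[H|H]]; auto.
- case: (ltngtP k k') => Ck.
  + by right; right; apply/LltSP; left.
  + by right; left; apply/LltSP; left.
  + subst k'; case: (ltngtP j j') => Cj.
    * by right; left; apply/LltSP; right; split=> //; left.
    * by right; right; apply/LltSP; right; split=> //; left.
    * subst j'; case: (cnf_tri x x') => [->|[H|H]]; first by left.
      - by right; left; apply/LltSP; right; split=> //; right.
      - by right; right; apply/LltSP; right; split=> //; right.
Qed.

Fixpoint lim (X : linord) (d : nat) (x : lo_car X) : Prop :=
  match d with
  | 0 => True
  | d'.+1 => forall y, lo_lt y x -> exists z, lo_lt y z /\ lo_lt z x /\ lim d' z
  end.

Definition Deg (X : linord) (x : lo_car X) (D : nat) : Prop := lim D x /\ ~ lim D.+1 x.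

Definition Step (X : linord) (w v : lo_car X) : Prop :=
  exists D, Deg v D /\ lo_lt w v /\ lim D w /\ forall z, lo_lt w z -> lo_lt z v -> ~ lim D z.

Definition Good (X : linord) (j : int) : Prop :=
  exists (v : nat -> lo_car X) (D0 : nat) (T : nat -> nat),
    (forall t, Step (v t.+1) (v t)) /\
    forall D, (D0 <= D)%N ->
      ((T D.+1)%:Z = (T D)%:Z + D%:Z - j)%R /\
      forall t, Deg (v t) D <-> (T D <= t < T D.+1)%N.

Section Iso.
Variables (X Y : linord) (f : lo_car X -> lo_car Y) (g : lo_car Y -> lo_car X).
Hypothesis fK : cancel f g.
Hypothesis gK : cancel g f.
Hypothesis fmono : forall x y, lo_lt x y <-> lo_lt (f x) (f y).

Lemma lim_iso d x : lim d x <-> lim d (f x).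
Proof.
elim: d x => [|d IH] x //=; split.
- move=> H y Hy.
  have : lo_lt (g y) x by apply/fmono; rewrite gK.
  case/H => z [H1 [H2 H3]]; exists (f z); split; last split.
  + by rewrite -(gK y); apply/fmono.
  + exact/fmono.
  + exact/IH.
- move=> H y /fmono /H [z [H1 [H2 H3]]].
  exists (g z); split; last split.
  + by apply/fmono; rewrite gK.
  + by apply/fmono; rewrite gK.
  + by apply/IH; rewrite gK.
Qed.

Lemma Deg_iso x D : Deg x D <-> Deg (f x) D.
Proof. rewrite /Deg; split=> [[H1 H2]|[H1 H2]]; split; try (by apply/lim_iso);
  by move=> H; apply: H2; apply/lim_iso. Qed.

Lemma Step_iso w v : Step w v -> Step (f w) (f v).
Proof.
case=> D [H1 [H2 [H3 H4]]]; exists D; split; last split; last split.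
- exact/Deg_iso.
- exact/fmono.
- exact/lim_iso.
- move=> z Hz1 Hz2; rewrite -(gK z) -lim_iso; apply: H4.
    by apply/fmono; rewrite gK.
  by apply/fmono; rewrite gK.
Qed.

Lemma Good_iso j : Good X j -> Good Y j.
Proof.
case=> v [D0 [T [Hs HT]]]; exists (fun t => f (v t)), D0, T; split.
  move=> t; exact: Step_iso.
move=> D HD; case: (HT D HD) => H1 H2; split=> // t.
by rewrite -Deg_iso.
Qed.
End Iso.

Lemma Good_iso_both (X Y : linord) j : order_iso X Y -> (Good X j <-> Good Y j).
Proof.
case=> f [[g fK gK] Hf]; split; first exact: (Good_iso gK Hf).
apply: (Good_iso fK) => x y.
by rewrite Hf !gK.
Qed.

Lemma interval_eq (a b a' b' : nat) : (a < b)%N -> (a' < b')%N ->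
  (forall t, (a <= t < b)%N <-> (a' <= t < b')%N) -> a = a' /\ b = b'.
Proof.
move=> H1 H2 H.
have h1 := proj1 (H a) (_ : (a <= a < b)%N).
have h2 := proj2 (H a') (_ : (a' <= a' < b')%N).
have h3 := proj1 (H b.-1) (_ : (a <= b.-1 < b)%N).
have h4 := proj2 (H b'.-1) (_ : (a' <= b'.-1 < b')%N).
have := h1 ltac:(lia); have := h2 ltac:(lia); have := h3 ltac:(lia); have := h4 ltac:(lia).
lia.
Qed.

Import Order.TTheory GRing.Theory Num.Theory.

Section Z.
Variable P : int -> bool.
Local Notation car := (Zsum_car P).

Definition blk (a : car) : int := (val a).1.
Definition elt (a : car) : Lelt := (val a).2.

Lemma blkP (a : car) : P (blk a).
Proof. case: a => [[i p] H]; rewrite /blk /elt /=; by case/andP: (H). Qed.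

Lemma eltV (a : car) : Lvalid (blk a) (elt a).
Proof. case: a => [[i p] H]; rewrite /blk /elt /=; by case/andP: (H). Qed.

Lemma ZltE (a b : car) : @lo_lt (Zsum P) a b <->
  ((blk a < blk b)%R \/ (blk a = blk b /\ Llt (elt a) (elt b))).
Proof.
case: a => [[i p] Ha]; case: b => [[i' p'] Hb]; rewrite /blk /elt /=.
change (((i < i')%R || ((i == i') && Llt p p')) <-> ((i < i')%R \/ (i = i' /\ Llt p p'))).
split; first by case/orP => [->|/andP[/eqP -> ->]]; [left|right].
by case=> [->|[-> ->]]; rewrite ?eqxx ?orbT.
Qed.

Lemma Zeq (a b : car) : blk a = blk b -> elt a = elt b -> a = b.
Proof.
case: a => [[i p] Ha]; case: b => [[i' p'] Hb]; rewrite /blk /elt /= => E1 E2.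
subst i' p'; congr exist; exact: bool_irrelevance.
Qed.

Definition mkZ (i : int) (p : Lelt) (Hi : P i) (Hp : Lvalid i p) : car :=
  exist _ (i, p) (introT andP (conj Hi Hp)).

Definition stepZ (a : car) : car :=
  @mkZ (blk a) (stepL (blk a) (elt a)) (blkP a) (let: And3 h _ _ := stepA (eltV a) in h).

Lemma blk_stepZ a : blk (stepZ a) = blk a. Proof. by []. Qed.
Lemma elt_stepZ a : elt (stepZ a) = stepL (blk a) (elt a). Proof. by []. Qed.

Definition dgZ (a : car) : nat := dg (blk a) (elt a).

Lemma between_blk (a b c : car) : @lo_lt (Zsum P) a b -> @lo_lt (Zsum P) b c ->
  blk a = blk c -> blk b = blk a /\ Llt (elt a) (elt b) /\ Llt (elt b) (elt c).
Proof.
move=> /ZltE H1 /ZltE H2 E.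
case: H1 => [L1|[E1 L1]]; case: H2 => [L2|[E2 L2]].
- exfalso; have := lt_trans L1 L2; by rewrite E ltxx.
- exfalso; move: L1; by rewrite E2 E ltxx.
- exfalso; move: L2; by rewrite -E1 E ltxx.
- by [].
Qed.

Lemma limZ d (a : car) : @lim (Zsum P) d a <-> (d <= dgZ a)%N.
Proof.
elim: d a => [|d IH] a //=; split.
- move=> H; case: (leqP d.+1 (dgZ a)) => // Hle; exfalso.
  have Hs : @lo_lt (Zsum P) (stepZ a) a.
    apply/ZltE; right; split=> //; rewrite elt_stepZ.
    by case: (stepA (eltV a)).
  case: (H _ Hs) => z [Hz1 [Hz2 /IH Hz3]].
  case: (between_blk Hz1 Hz2 (blk_stepZ a)) => Eb [L1 L2].
  rewrite blk_stepZ in Eb.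
  have Vz : Lvalid (blk a) (elt z) by rewrite -Eb; exact: eltV.
  rewrite elt_stepZ in L1.
  have := stepB (eltV a) Vz L1 L2.
  rewrite /dgZ Eb in Hz3; rewrite /dgZ in Hle; lia.
- move=> Hd y /ZltE Hy.
  have Hdg : (0 < dg (blk a) (elt a))%N by rewrite /dgZ in Hd; lia.
  have [z [Vz Hyz Hza Hdz]] : exists z, [/\ Lvalid (blk a) z,
      (blk y < blk a)%R \/ Llt (elt y) z, Llt z (elt a) & (dg (blk a) (elt a) <= (dg (blk a) z).+1)%N].
    case: Hy => [Lb|[Eb Ll]].
      have [V1 L1 _] := stepA (eltV a).
      have [z [Vz _ Hza Hdz]] := stepC (eltV a) V1 L1 Hdg.
      by exists z; split=> //; left.
    have := eltV y; rewrite Eb => Vy.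
    have [z [Vz Hyz Hza Hdz]] := stepC (eltV a) Vy Ll Hdg.
    by exists z; split=> //; right.
  exists (mkZ (blkP a) Vz); split; last split.
  + apply/ZltE; case: Hy => [Lb|[Eb _]]; first by left.
    case: Hyz => [L|L]; first by left.
    by right; split; [exact: Eb|].
  + by apply/ZltE; right.
  + apply/IH; change (d <= dg (blk a) z)%N; rewrite /dgZ in Hd; lia.
Qed.
End Z.

Definition W (i : int) (t : nat) : Lelt := iter t (stepL i) (LSum 1 0 [::]).

Fixpoint sig (i : int) (k : nat) : nat :=
  match k with 0 => 0%N | k'.+1 => (sig i k' + Lcoef i k'.+2)%N end.

Lemma W_add i n s : W i (n + s) = iter s (stepL i) (W i n).
Proof. by rewrite /W addnC iterD. Qed.

Lemma W_mid_gen i k : W i (sig i k) = LSum k.+1 0 [::] ->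
  forall s, (0 < s <= Lcoef i k.+2)%N -> W i (sig i k + s) = LSum k.+2 (Lcoef i k.+2 - s) [::].
Proof.
move=> H0; elim=> [|s IH] // /andP[_ Hs].
rewrite addnS /W iterS -/(W i _).
case: s IH Hs => [|s] IH Hs.
  by rewrite addn0 H0 /= subn1.
rewrite IH; last lia.
rewrite /= ifN; last lia.
congr LSum; lia.
Qed.

Lemma W_sig i k : W i (sig i k) = LSum k.+1 0 [::].
Proof.
elim: k => [|k IH] //=.
have Hc : (0 < Lcoef i k.+2)%N by apply: Lcoef_gt0.
rewrite (W_mid_gen IH) ?subnn //; lia.
Qed.

Lemma W_mid i k s : (0 < s <= Lcoef i k.+2)%N -> W i (sig i k + s) = LSum k.+2 (Lcoef i k.+2 - s) [::].
Proof. move=> Hs; exact: (W_mid_gen (W_sig i k) Hs). Qed.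

Lemma sig_strict i k : (sig i k < sig i k.+1)%N.
Proof. rewrite /=; have := Lcoef_gt0 i (ltn0Sn k.+1); lia. Qed.

Lemma sig_mono i k k' : (k <= k')%N -> (sig i k <= sig i k')%N.
Proof.
move=> H; rewrite -(subnKC H); elim: (k' - k)%N => [|n IH]; first by rewrite addn0.
rewrite addnS; have := sig_strict i (k + n); lia.
Qed.

Lemma sig_find i t : exists k, (sig i k <= t < sig i k.+1)%N.
Proof.
elim: t => [|t [k /andP[H1 H2]]].
  by exists 0%N; have := sig_strict i 0.
case: (ltnP t.+1 (sig i k.+1)) => H3.
  by exists k; rewrite H3 andbT; lia.
exists k.+1; have := sig_strict i k.+1; lia.
Qed.

Lemma sig_uniq i k k' t : (sig i k <= t < sig i k.+1)%N -> (sig i k' <= t < sig i k'.+1)%N -> k = k'.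
Proof.
move=> H1 H2; case: (ltngtP k k') => C //.
- have := sig_mono i C; lia.
- have := sig_mono i C; lia.
Qed.

Lemma dgW i t k : (sig i k <= t < sig i k.+1)%N -> dg i (W i t) = Lexp i k.+2.
Proof.
move=> /andP[H1 H2].
have -> : t = (sig i k + (t - sig i k))%N by lia.
case E: (t - sig i k)%N => [|s].
  by rewrite addn0 W_sig.
rewrite W_mid /=; last by move: H2; rewrite /=; lia.
rewrite ifN //; move: H2; rewrite /=; lia.
Qed.

Lemma degW_iff i D t : (Lexp i 2 <= D)%N ->
  (D = dg i (W i t) <-> (sig i (D - Lexp i 2) <= t < sig i (D - Lexp i 2).+1)%N).
Proof.
move=> HD; have [k Hk] := sig_find i t.
rewrite (dgW Hk); split.
  move=> ->; have -> : (Lexp i k.+2 - Lexp i 2 = k)%N by rewrite /Lexp; lia.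
  exact: Hk.
move=> H; have := sig_uniq Hk H; rewrite /Lexp in HD *; lia.
Qed.

Lemma Lcoef_int i k : ((Lcoef i k)%:Z = (Lexp i k)%:Z - i)%R.
Proof. rewrite /Lcoef /Lexp; case: i => n /=; lia. Qed.

Definition mu (i : int) (p : Lelt) : nat :=
  match p with LSum _ j x => (j + sumn x)%N | LTop x => (sumn x + Lcoef i 1)%N end.

Definition isP (p : Lelt) : bool :=
  match p with LSum k j x => (j == 0%N) && (x == [::]) | LTop _ => false end.

Lemma sumn_strip s : sumn (strip s) = sumn s.
Proof.
elim: s => [|a s IH] //=; case: ifP => [/andP[/eqP E /eqP ->]|_] /=; last by rewrite IH.
by rewrite -IH E.
Qed.

Lemma nth_le_sumn s r : (nth 0 s r <= sumn s)%N.
Proof. elim: s r => [|a s IH] [|r] //=; [lia | have := IH r; lia]. Qed.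

Lemma sumn_dec x : cnf_normal x -> x != [::] -> (sumn (dec x) < sumn x)%N.
Proof.
move=> Hn H0; rewrite /dec sumn_strip sumn_set_nth_ltn; last exact: lowd_lt.
have := lowd_nz Hn H0; have := nth_le_sumn x (lowd x); lia.
Qed.

Lemma valid_iter i p s : Lvalid i p -> Lvalid i (iter s (stepL i) p).
Proof. move=> H; elim: s => [|s IH] //=; by case: (stepA IH). Qed.

Lemma dg_iter i p s : Lvalid i p -> (dg i p <= dg i (iter s (stepL i) p))%N.
Proof.
move=> H; elim: s => [|s IH] //=.
have [_ _ L] := stepA (valid_iter s H); lia.
Qed.

Lemma mu_step i p : Lvalid i p -> ~~ isP p -> isP (stepL i p) \/ (mu i (stepL i p) < mu i p)%N.
Proof.
case: p => [x|k j x] /=.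
- move=> Hn _; case: (x =P [::]) => [->|/eqP H0] /=.
    right; rewrite /Lcoef; lia.
  case: ifP => _; first by left; rewrite /= eqxx.
  right; rewrite /mu; have := sumn_dec Hn H0; lia.
- move=> /and4P[Hk Hj Hn Hs] HP; case: (x =P [::]) => [Ex|/eqP H0] /=.
    subst x; case: (j =P 0%N) => [Ej|/eqP Hj0]; first by subst j.
    right; rewrite /mu /=; lia.
  right; have := sumn_dec Hn H0; lia.
Qed.

Lemma reach i p : Lvalid i p -> exists s K, iter s (stepL i) p = LSum K.+1 0 [::].
Proof.
move=> Vp; move Hm: (mu i p) => n; elim/ltn_ind: n p Hm Vp => n IH p Hm Vp.
case HP: (isP p).
  move: HP Vp; case: p Hm IH => [x|k j x] //= _ _.
  move=> /andP[/eqP -> /eqP ->] /and4P[Hk _ _ _].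
  by exists 0%N, k.-1; rewrite prednK.
have [V1 _ _] := stepA Vp.
case: (mu_step Vp (negbT HP)) => [HP1|Hlt].
  move: HP1 V1; case E: (stepL i p) => [x|k j x] //=.
  move=> /andP[/eqP Ej /eqP Ex] /and4P[Hk _ _ _].
  by exists 1%N, k.-1; rewrite /= E Ej Ex prednK.
have Hlt' : (mu i (stepL i p) < n)%N by rewrite -Hm.
have [s [K E]] := IH _ Hlt' (stepL i p) erefl V1.
by exists s.+1, K; rewrite iterSr.
Qed.

Section Z2.
Variable P : int -> bool.
Local Notation car := (Zsum_car P).
Local Notation Z := (Zsum P).

Lemma DegZ (a : car) D : @Deg Z a D <-> D = dgZ a.
Proof.
rewrite /Deg !limZ; split; first by case=> H1 H2; apply/eqP; rewrite eqn_leq H1 /=; lia.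
by move=> ->; split=> //; lia.
Qed.

Lemma stepZ_Step (a : car) : @Step Z (stepZ a) a.
Proof.
exists (dgZ a); split; first exact/DegZ.
have [V1 L1 D1] := stepA (eltV a).
split; first by apply/ZltE; right.
split; first by apply/limZ.
move=> z Hz1 Hz2 /limZ Hz.
case: (between_blk Hz1 Hz2 (blk_stepZ a)) => Eb [L2 L3].
rewrite blk_stepZ in Eb; rewrite elt_stepZ in L2.
have Vz : Lvalid (blk a) (elt z) by rewrite -Eb; exact: eltV.
have := stepB (eltV a) Vz L2 L3; rewrite /dgZ Eb in Hz; lia.
Qed.

Lemma Step_uniq (w a : car) : @Step Z w a -> w = stepZ a.
Proof.
case=> D [/DegZ HD [Hwa [/limZ Hw Hz]]].
have [V1 L1 D1] := stepA (eltV a).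
have Hsa : @lo_lt Z (stepZ a) a by apply/ZltE; right.
have Hls : @lim Z D (stepZ a) by apply/limZ; rewrite HD.
move/ZltE: (Hwa) => [Lb|[Eb Ll]].
  exfalso; apply: (Hz (stepZ a)) => //; apply/ZltE; by left.
have Vw : Lvalid (blk a) (elt w) by rewrite -Eb; exact: eltV.
case: (Ltot (elt w) (stepL (blk a) (elt a))) => [E|[L|L]].
- by apply: Zeq.
- exfalso; apply: (Hz (stepZ a)) => //; apply/ZltE; right; split=> //.
- exfalso; have := stepB (eltV a) Vw L Ll; rewrite /dgZ Eb in Hw; rewrite /dgZ in HD; lia.
Qed.

Lemma iter_blk s (a : car) : blk (iter s (@stepZ P) a) = blk a.
Proof. by elim: s => //= s IH; rewrite blk_stepZ. Qed.

Lemma iter_elt s (a : car) : elt (iter s (@stepZ P) a) = iter s (stepL (blk a)) (elt a).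
Proof. by elim: s => //= s IH; rewrite elt_stepZ iter_blk IH. Qed.

Lemma walk_iter (v : nat -> car) : (forall t, @Step Z (v t.+1) (v t)) ->
  forall t, v t = iter t (@stepZ P) (v 0%N).
Proof. move=> H; elim=> [|t IH] //=; rewrite -IH; exact: Step_uniq. Qed.

Lemma Good_pos j : P j -> Good Z j.
Proof.
move=> Hj.
have V1 : Lvalid j (LSum 1 0 [::]) by apply: mkvalid => //; exact: Lcoef_gt0.
pose a1 := mkZ Hj V1.
exists (fun t => iter t (@stepZ P) a1), (Lexp j 2), (fun D => sig j (D - Lexp j 2)); split.
  move=> t; exact: stepZ_Step.
move=> D HD; split.
  have -> : (D.+1 - Lexp j 2 = (D - Lexp j 2).+1)%N by lia.
  rewrite /= PoszD Lcoef_int.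
  have -> : Lexp j (D - Lexp j 2).+2 = D by rewrite /Lexp in HD *; lia.
  lia.
move=> t; rewrite DegZ /dgZ iter_blk iter_elt.
have -> : (D.+1 - Lexp j 2 = (D - Lexp j 2).+1)%N by lia.
exact: (degW_iff t HD).
Qed.

Lemma Good_neg j : Good Z j -> P j.
Proof.
case=> v [D0 [T [Hs HT]]].
have Hv := walk_iter Hs.
set a0 := v 0%N in Hv.
set i := blk a0.
have [s0 [K HK]] := reach (eltV a0).
pose D := maxn (maxn D0 (Lexp i K.+3)) (absz j).+1.
have HD0 : (D0 <= D)%N by rewrite /D; lia.
have HD1 : (Lexp i K.+3 <= D)%N by rewrite /D; lia.
have HD2 : ((absz j).+1 <= D)%N by rewrite /D; lia.
pose k0 := (D - Lexp i 2)%N.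
have Hk0 : (K.+1 <= k0)%N by rewrite /k0 /Lexp in HD1 *; lia.
have HDk : Lexp i k0.+2 = D by rewrite /k0 /Lexp in HD1 *; lia.
have Hsm := sig_mono i (ltnW Hk0).
pose A := (sig i k0 + s0 - sig i K)%N.
pose B := (sig i k0.+1 + s0 - sig i K)%N.
have Hst := sig_strict i k0.
have Hdeg : forall t, @Deg Z (v t) D <-> (A <= t < B)%N.
  move=> t; rewrite DegZ /dgZ Hv iter_blk iter_elt -/i.
  case: (ltnP t s0) => Ht.
    have := dg_iter (s0 - t) (valid_iter t (eltV a0)).
    rewrite -iterD subnK; last lia.
    rewrite -/i HK => Hle.
    have Hlt : (dg i (iter t (stepL i) (elt a0)) < D)%N.
      move: Hle; change (dg i (LSum K.+1 0 [::])) with (Lexp i K.+2).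
      rewrite /Lexp in HD1 *; lia.
    split; [move=> E; lia | rewrite /A; lia].
  have -> : iter t (stepL i) (elt a0) = W i (sig i K + (t - s0)).
    rewrite W_add W_sig -HK -iterD subnK //.
  rewrite degW_iff; last by rewrite /Lexp in HD1 *; lia.
  rewrite -/k0 /A /B; lia.
case: (HT D HD0) => HTD HTi.
have Hint : forall t, (T D <= t < T D.+1)%N <-> (A <= t < B)%N.
  by move=> t; rewrite -HTi Hdeg.
have HTlt : (T D < T D.+1)%N by lia.
have HAB : (A < B)%N by rewrite /A /B; lia.
have [E1 E2] := interval_eq HTlt HAB Hint.
have := Lcoef_int i k0.+2; rewrite HDk.
move: HTD; rewrite E1 E2 /A /B /= => HTD Hc.
have Hij : i = j by lia.
rewrite -Hij; exact: blkP.
Qed.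
End Z2.

Theorem mainTheorem5 :
  ~ order_iso I_even I_odd /\ ~ order_iso I_even I_all /\ ~ order_iso I_odd I_all.
Proof.
split; last split.
- move=> H; have := (Good_iso_both 1 H).2 (Good_pos (P := fun i => odd `|i|) (isT : odd `|1%R|)).
  by move/Good_neg.
- move=> H; have := (Good_iso_both 1 H).2 (Good_pos (P := fun _ => true) (isT : true)).
  by move/Good_neg.
- move=> H; have := (Good_iso_both 0 H).2 (Good_pos (P := fun _ => true) (isT : true)).
  by move/Good_neg.
Qed.
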